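(* Let $n,m,n_g,n_w,r$, $A\in\mathbb{R}^{n\times n}$, $S\in\mathbb{R}^{n\times n_g}$, $C\in\mathbb{R}^{m\times n}$, $D_\omega\in\mathbb{R}^{n\times n_w}$ be given, $n_z=n+rn_g$, $d_n=(r-1)n_g$, and define $$A_a=\begin{bmatrix} A & S & 0\\ 0 & 0 & I_{d_n}\\ 0&0&0\end{bmatrix},\quad D_a=\begin{bmatrix} D_\omega & 0\\ 0&0\\ 0 & I_{n_g}\end{bmatrix},\quad C_a=\begin{bmatrix} C & 0\end{bmatrix},\quad \bar C_a=\begin{bmatrix} I_n & 0 & 0\\ 0 & I_{n_g} & 0\end{bmatrix}.$$ Suppose there exist $P\in\mathbb{R}^{n_z\times n_z}$, $P\succ 0$, $R,Q\in\mathbb{R}^{n_z\times m}$ and a scalar $\bar\lambda>0$ such that $$\begin{bmatrix} X & -(P+RC_a)D_a & \bar C_a^\top\\ * & -\bar\lambda I & 0\\ * & * & -\bar\lambda I\end{bmatrix}\prec 0,\qquad X:=A_a^\top P+A_a^\top C_a^\top R^\top-C_a^\top Q^\top+PA_a+RC_aA_a-QC_a.$$ Let $E=P^{-1}R$, $K=P^{-1}Q$, $M=I+EC_a$, $N=MA_a-KC_a$, and $T_{e_d\omega_a}(s)=-\bar C_a(sI-N)^{-1}MD_a$ (the transfer matrix from $\omega_a$ to $e_d=\bar C_a e$ of the error dynamics $\dot e=Ne-MD_a\omega_a+[K\ -E]\nu_a$). Then $\|T_{e_d\omega_a}\|_\infty<\bar\lambda$.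
   Context: $*$ denotes the block that makes the matrix symmetric. The $H_\infty$-norm is $\|T\|_\infty=\sup_{\mu\in\mathbb{R}^+}\sigma_{\max}(T(i\mu))$. *)

(* Defs.v *)
From HB Require Import structures.
From mathcomp Require Import all_boot all_order all_algebra.
From mathcomp Require Import all_classical all_reals.
From mathcomp Require Import ereal.
From mathcomp Require Import complex.
Set Implicit Arguments. Unset Strict Implicit. Unset Printing Implicit Defensive.
Import Order.TTheory GRing.Theory Num.Theory.
Local Open Scope ring_scope.

Definition posdef (R : realType) (k : nat) (M : 'M[R]_k) : Prop :=
  M^T = M /\ forall x : 'cV[R]_k, x != 0 -> 0 < (x^T *m M *m x) 0 0.
Definition negdef (R : realType) (k : nat) (M : 'M[R]_k) : Prop :=
  posdef (- M).

Definition cvnorm (R : realType) (k : nat) (v : 'cV[R[i]]_k) : R :=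
  Num.sqrt (\sum_(j < k) (complex.Re (v j 0) ^+ 2 + complex.Im (v j 0) ^+ 2)).

Definition sigma_max (R : realType) (p q : nat) (M : 'M[R[i]]_(p, q)) : \bar R :=
  ereal_sup [set ((cvnorm (M *m v) / cvnorm v)%:E) | v in [set v : 'cV[R[i]]_q | v != 0]].

Definition hinf_norm (R : realType) (p q : nat) (T : R[i] -> 'M[R[i]]_(p, q)) : \bar R :=
  ereal_sup [set sigma_max (T (Complex 0 mu)) | mu in [set mu : R | 0 <= mu]].

Definition cmx (R : realType) (p q : nat) (M : 'M[R]_(p, q)) : 'M[R[i]]_(p, q) :=
  map_mx (fun x : R => Complex x 0) M.

Section Aug.
Variables (R : realType) (n m ng nw r : nat).
Local Notation dn := ((r - 1) * ng)%N.
Local Notation nz := (n + (ng + dn))%N.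

Lemma rows_eq : (n + (dn + ng) = nz)%N.
Proof. by rewrite (addnC dn). Qed.

(* A_a = [A S 0; 0 0 I_dn; 0 0 0], rows (n,dn,ng), cols (n,ng,dn) *)
Definition Aa (A : 'M[R]_n) (S : 'M[R]_(n, ng)) : 'M[R]_nz :=
  castmx (rows_eq, erefl nz)
    (block_mx A (row_mx S 0) 0
       (col_mx (row_mx (0 : 'M[R]_(dn, ng)) (1%:M : 'M[R]_dn)) 0)).

(* D_a = [D_w 0; 0 0; 0 I_ng], rows (n,dn,ng), cols (nw,ng) *)
Definition Da (Dw : 'M[R]_(n, nw)) : 'M[R]_(nz, nw + ng) :=
  castmx (rows_eq, erefl (nw + ng)%N)
    (col_mx (row_mx Dw (0 : 'M[R]_(n, ng)))
       (col_mx (0 : 'M[R]_(dn, nw + ng)) (row_mx (0 : 'M[R]_(ng, nw)) (1%:M : 'M[R]_ng)))).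

Definition Ca (C : 'M[R]_(m, n)) : 'M[R]_(m, nz) := row_mx C 0.

Definition Cbara : 'M[R]_(n + ng, nz) :=
  block_mx (1%:M : 'M[R]_n) 0 0 (row_mx (1%:M : 'M[R]_ng) (0 : 'M[R]_(ng, dn))).
End Aug.

(* Main.v *)
Require Import Defs.
From HB Require Import structures.
From mathcomp Require Import all_boot all_order all_algebra.
From mathcomp Require Import all_classical all_reals.
From mathcomp Require Import ereal.
From mathcomp Require Import complex.
Import Order.TTheory GRing.Theory Num.Theory.
Local Open Scope ring_scope.

From mathcomp Require Import ring lra.
Set Implicit Arguments. Unset Strict Implicit.

Section RealMargin.
Variable R : realType.

Definition qf k (M : 'M[R]_k) (a b : 'cV[R]_k) : R := (a^T *m M *m b) 0 0.

Lemma qf_sym k (M : 'M[R]_k) a b : M^T = M -> qf M a b = qf M b a.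
Proof.
move=> hM; rewrite /qf.
have -> : (a^T *m M *m b) 0 0 = ((a^T *m M *m b)^T) 0 0 by rewrite !mxE.
by rewrite !trmx_mul trmxK hM mulmxA.
Qed.


Lemma qf_lin k (M : 'M[R]_k) a b t :
  qf M (a - t *: b) (a - t *: b) =
  qf M a a - t * qf M a b - t * qf M b a + t ^+ 2 * qf M b b.
Proof.
have hT : (a - t *: b)^T = a^T - t *: b^T by rewrite linearB linearZ.
rewrite /qf hT !mulmxBl !mulmxBr -?scalemxAr -?scalemxAl -?scalemxAr -?scalemxAl -?scalemxAr -?scalemxAl scalerA.
move: (a^T *m M *m a) (a^T *m M *m b) (b^T *m M *m a) (b^T *m M *m b) => A1 A2 A3 A4.
rewrite !mxE; ring.
Qed.

Lemma qf0 k (M : 'M[R]_k) a : qf M a 0 = 0.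
Proof. by rewrite /qf mulmx0 mxE. Qed.

Lemma qf_cs k (M : 'M[R]_k) a b : posdef M -> qf M a b ^+ 2 <= qf M a a * qf M b b.
Proof.
move=> [hM hp].
have [->|nb] := eqVneq b 0.
  have z1 : qf M a 0 = 0 by exact: qf0.
  have z2 : qf M 0 0 = 0 by exact: qf0.
  by rewrite z1 z2 expr0n mulr0.
have pb := hp b nb; rewrite -/(qf M b b) in pb.
have h0 : 0 <= qf M (a - (qf M a b / qf M b b) *: b) (a - (qf M a b / qf M b b) *: b).
  have [->|na] := eqVneq (a - (qf M a b / qf M b b) *: b) 0; first by rewrite qf0.
  exact: ltW (hp _ na).
rewrite qf_lin (qf_sym b a hM) in h0.
have e : qf M a b / qf M b b * qf M a b = qf M a b ^+ 2 / qf M b b.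
  by field; rewrite gt_eqF.
have e2 : (qf M a b / qf M b b) ^+ 2 * qf M b b = qf M a b ^+ 2 / qf M b b.
  by field; rewrite gt_eqF.
rewrite e e2 in h0.
have : qf M a b ^+ 2 / qf M b b <= qf M a a by lra.
by rewrite ler_pdivrMr.
Qed.

Lemma qf_bound k (A : 'M[R]_k) a :
  qf A a a <= (\sum_j \sum_i `|A i j|) * (a^T *m a) 0 0.
Proof.
set S := (a^T *m a) 0 0.
have hS : S = \sum_l a l 0 ^+ 2 by rewrite /S mxE; apply: eq_bigr => l _; rewrite mxE expr2.
have hi : forall i, a i 0 ^+ 2 <= S.
  move=> i; rewrite hS (bigD1 i) //= lerDl; apply: sumr_ge0 => l _; exact: sqr_ge0.
rewrite /qf mxE mulr_suml; apply: ler_sum => j _.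
rewrite mxE !mulr_suml; apply: ler_sum => i _.
rewrite mxE.
have h1 := hi i; have h2 := hi j.
have : `|a i 0| * `|a j 0| <= S.
  have ha := normr_ge0 (a i 0); have hb := normr_ge0 (a j 0).
  rewrite -real_normK ?num_real // in h1; rewrite -real_normK ?num_real // in h2.
  nra.
move=> hab.
apply: (le_trans (ler_norm _)).
rewrite !normrM mulrAC.
by rewrite mulrC; apply: ler_wpM2l.
Qed.


Lemma posdef_margin k (M : 'M[R]_k) : posdef M ->
  exists2 e, 0 < e & forall a, e * (a^T *m a) 0 0 <= qf M a a.
Proof.
move=> pd; have [hM hp] := pd.
have qa0 : forall a, 0 <= qf M a a.
  move=> a; have [->|na] := eqVneq a 0; first by rewrite qf0.
  exact: ltW (hp _ na).
have Mu : M \in unitmx.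
  rewrite unitmxE unitfE; apply/negP => /det0P [v nv hv].
  have nvT : v^T != 0.
    apply: contraNneq nv => /(congr1 trmx); rewrite trmxK => ->; apply/eqP; exact: trmx0.
  have := hp _ nvT; by rewrite trmxK hv mul0mx mxE ltxx.
set Mi := invmx M.
set c := \sum_j \sum_i `|Mi^T i j|.
have c0 : 0 <= c by apply: sumr_ge0 => j _; apply: sumr_ge0 => i _.
exists (c + 1)^-1; first by rewrite invr_gt0 ltr_wpDl.
move=> a; set b := Mi *m a.
have hb : M *m b = a by rewrite /b mulmxA mulmxV // mul1mx.
have e1 : (a^T *m a) 0 0 = qf M a b by rewrite /qf -mulmxA hb.
have e2 : qf M b b = qf Mi^T a a by rewrite /qf -mulmxA hb /b trmx_mul.
have cs := qf_cs a b pd; rewrite -e1 e2 in cs.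
have bd := qf_bound Mi^T a; rewrite -/c in bd.
set S := (a^T *m a) 0 0 in cs bd e1 *.
have S0 : 0 <= S.
  rewrite /S mxE; apply: sumr_ge0 => l _; rewrite mxE -expr2; exact: sqr_ge0.
have q0 := qa0 a.
rewrite mulrC ler_pdivrMr ?ltr_wpDl //.
have h : S * S <= qf M a a * c * S.
  rewrite -expr2 -mulrA; apply: (le_trans cs); exact: ler_wpM2l.
have [->|Sp] := eqVneq S 0; first by rewrite mulr_ge0 // addr_ge0.
have Sp' : 0 < S by rewrite lt_def Sp S0.
have h2 : S <= qf M a a * c by rewrite -(ler_pM2r Sp').
nra.
Qed.
Lemma posdef_unit k (M : 'M[R]_k) : posdef M -> M \in unitmx.
Proof.
move=> [hM hp].
rewrite unitmxE unitfE; apply/negP => /det0P [v nv hv].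
have nvT : v^T != 0.
  apply: contraNneq nv => /(congr1 trmx); rewrite trmxK => ->; apply/eqP; exact: trmx0.
have := hp _ nvT; by rewrite trmxK hv mul0mx mxE ltxx.
Qed.

Lemma qfN k (L : 'M[R]_k) a : qf (- L) a a = - (a^T *m L *m a) 0 0.
Proof. by rewrite /qf mulmxN mulNmx; move: (a^T *m L *m a) => W; rewrite mxE. Qed.
End RealMargin.
Section H.
Variable R : realType.
Local Notation C := (R[i]).
Local Open Scope complex_scope.

Definition hadj p q (A : 'M[C]_(p,q)) : 'M[C]_(q,p) := (map_mx (@conjc R) A)^T.

Lemma cmxE p q (A : 'M[R]_(p,q)) : cmx A = map_mx (real_complex R) A.
Proof. by []. Qed.

Lemma hadjM p q k (A : 'M[C]_(p,q)) (B : 'M[C]_(q,k)) : hadj (A *m B) = hadj B *m hadj A.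
Proof. by rewrite /hadj map_mxM trmx_mul. Qed.
Lemma hadjD p q (A B : 'M[C]_(p,q)) : hadj (A + B) = hadj A + hadj B.
Proof. by rewrite /hadj map_mxD linearD. Qed.
Lemma hadjN p q (A : 'M[C]_(p,q)) : hadj (- A) = - hadj A.
Proof. by rewrite /hadj map_mxN linearN. Qed.
Lemma hadjB p q (A B : 'M[C]_(p,q)) : hadj (A - B) = hadj A - hadj B.
Proof. by rewrite hadjD hadjN. Qed.
Lemma hadjZ p q a (A : 'M[C]_(p,q)) : hadj (a *: A) = conjc a *: hadj A.
Proof. by rewrite /hadj map_mxZ linearZ. Qed.
Lemma hadj_col p1 p2 q (A : 'M[C]_(p1,q)) (B : 'M[C]_(p2,q)) :
  hadj (col_mx A B) = row_mx (hadj A) (hadj B).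
Proof. by rewrite /hadj map_col_mx tr_col_mx. Qed.
Lemma hadj_cmx p q (A : 'M[R]_(p,q)) : hadj (cmx A) = cmx A^T.
Proof. by apply/matrixP=> i j; rewrite !mxE /= oppr0. Qed.

Lemma core nz q p (X P N : 'M[C]_nz) (G : 'M[C]_(nz, q)) (Cb : 'M[C]_(p, nz))
   (l s : C) (x : 'cV[C]_nz) (v : 'cV[C]_q) (y : 'cV[C]_p) :
  hadj P = P -> X = P *m N + hadj N *m P -> conjc s = - s ->
  N *m x = s *: x - G *m v ->
  let B := - (P *m G) in
  let xi := col_mx (col_mx x (- v)) y in
  hadj xi *m block_mx (block_mx X B (hadj B) (- l%:M)) (col_mx (hadj Cb) 0)
     (row_mx Cb 0) (- l%:M) *m xi =
  - (l *: (hadj v *m v)) + hadj x *m hadj Cb *m y + hadj y *m Cb *m x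
  - l *: (hadj y *m y).
Proof.
move=> hP hX hs hN B xi.
rewrite /xi !hadj_col hadjN !mul_row_block mul_mx_row add_row_mx !mul_row_col !mulmx0 ?mul0mx !addr0 /B hadjN hadjM hP hX.
have h1 : hadj x *m P *m N *m x = s *: (hadj x *m P *m x) - hadj x *m P *m G *m v.
  by rewrite -(mulmxA (hadj x *m P)) hN mulmxBr -scalemxAr ?mulmxA.
have h2 : hadj x *m hadj N *m P *m x = conjc s *: (hadj x *m P *m x) - hadj v *m hadj G *m P *m x.
  by rewrite -hadjM hN hadjB hadjZ hadjM !mulmxBl -!scalemxAl ?mulmxA.
rewrite !(mulmxDl, mulmxDr, mulmxN, mulNmx, opprK, mul_mx_scalar) !mulmxA h1 h2 hs -!scalemxAl.
move: (hadj x *m P *m x) (hadj x *m P *m G *m v) (hadj v *m hadj G *m P *m x)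
  (hadj y *m Cb *m x) (hadj v *m v) (hadj x *m hadj Cb *m y) (hadj y *m y)
  => a1 a2 a3 a4 a5 a6 a7.
apply/matrixP => i j; rewrite !mxE; ring.
Qed.

Definition nrm2 k (v : 'cV[C]_k) : R :=
  \sum_(j < k) (complex.Re (v j 0) ^+ 2 + complex.Im (v j 0) ^+ 2).

Lemma ReD (a b : C) : complex.Re (a + b) = complex.Re a + complex.Re b.
Proof. by case: a; case: b. Qed.

Lemma Re_sum k (F : 'I_k -> C) : complex.Re (\sum_i F i) = \sum_i complex.Re (F i).
Proof. exact: (big_morph _ ReD). Qed.

Lemma hnorm k (v : 'cV[C]_k) : complex.Re ((hadj v *m v) 0 0) = nrm2 v.
Proof.
rewrite mxE Re_sum; apply: eq_bigr => j _; rewrite !mxE.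
case: (v j 0) => a b /=. ring.
Qed.

Lemma Re_quad k (L : 'M[R]_k) (xi : 'cV[C]_k) :
  complex.Re ((hadj xi *m cmx L *m xi) 0 0) =
  ((map_mx (@complex.Re R) xi)^T *m L *m map_mx (@complex.Re R) xi) 0 0 +
  ((map_mx (@complex.Im R) xi)^T *m L *m map_mx (@complex.Im R) xi) 0 0.
Proof.
rewrite !mxE -big_split Re_sum; apply: eq_bigr => j _ /=.
rewrite !mxE !mulr_suml Re_sum -big_split; apply: eq_bigr => i _ /=.
rewrite !mxE; case: (xi i 0) => a b; case: (xi j 0) => c d /=. ring.
Qed.

Lemma nrm2E k (xi : 'cV[C]_k) : nrm2 xi =
  ((map_mx (@complex.Re R) xi)^T *m map_mx (@complex.Re R) xi) 0 0 +
  ((map_mx (@complex.Im R) xi)^T *m map_mx (@complex.Im R) xi) 0 0.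
Proof.
rewrite !mxE -big_split; apply: eq_bigr => j _ /=; rewrite !mxE; ring.
Qed.

Lemma nrm2_ge0 k (v : 'cV[C]_k) : 0 <= nrm2 v.
Proof. apply: sumr_ge0 => j _; apply: addr_ge0; exact: sqr_ge0. Qed.

Lemma nrm2_gt0 k (v : 'cV[C]_k) : v != 0 -> 0 < nrm2 v.
Proof.
move=> nv; have [j nj] : exists j, v j 0 != 0.
  apply/existsP; apply: contraNT nv; rewrite negb_exists => /forallP h.
  by apply/eqP/matrixP => i k'; rewrite !ord1 mxE; apply/eqP/negbNE/h.
rewrite /nrm2 (bigD1 j) //= ltr_pwDl //; last first.
  apply: sumr_ge0 => l _; apply: addr_ge0; exact: sqr_ge0.
move: nj; case: (v j 0) => a b; rewrite eq_complex /= negb_and => h.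
case/orP: h => h.
  by apply: ltr_pwDl; [rewrite lt_def sqrf_eq0 h sqr_ge0|exact: sqr_ge0].
by apply: ltr_wpDl; [exact: sqr_ge0|rewrite lt_def sqrf_eq0 h sqr_ge0].
Qed.

Lemma nrm2_col k1 k2 (a : 'cV[C]_k1) (b : 'cV[C]_k2) :
  nrm2 (col_mx a b) = nrm2 a + nrm2 b.
Proof. by rewrite /nrm2 big_split_ord /=; congr (_ + _); apply: eq_bigr => j _;
  rewrite ?col_mxEu ?col_mxEd. Qed.


Lemma nrm2N k (v : 'cV[C]_k) : nrm2 (- v) = nrm2 v.
Proof. by apply: eq_bigr => j _; rewrite mxE; case: (v j 0) => a b /=; rewrite !sqrrN. Qed.

Lemma core_bound nz q p (X P N : 'M[C]_nz) (G : 'M[C]_(nz, q)) (Cb : 'M[C]_(p, nz))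
   (lam e : R) (s : C) (x : 'cV[C]_nz) (v : 'cV[C]_q) :
  hadj P = P -> X = P *m N + hadj N *m P -> conjc s = - s ->
  N *m x = s *: x - G *m v ->
  (forall xi : 'cV[C]_((nz + q) + p),
    complex.Re ((hadj xi *m block_mx (block_mx X (- (P *m G)) (hadj (- (P *m G)))
        (- (lam%:C)%:M)) (col_mx (hadj Cb) 0) (row_mx Cb 0) (- (lam%:C)%:M) *m xi) 0 0)
     <= - e * nrm2 xi) ->
  0 < lam -> 0 <= e ->
  lam^-1 * nrm2 (Cb *m x) - lam * nrm2 v <= - e * (nrm2 x + nrm2 v).
Proof.
move=> hP hX hs hN Hm hl he.
set z := Cb *m x.
have := Hm (col_mx (col_mx x (- v)) ((lam^-1)%:C *: z)).
have := core Cb (lam%:C) ((lam^-1)%:C *: z) hP hX hs hN; rewrite /= => ->.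
rewrite !nrm2_col nrm2N.
have e1 : hadj x *m hadj Cb *m ((lam^-1)%:C *: z) = (lam^-1)%:C *: (hadj z *m z).
  by rewrite -hadjM -scalemxAr.
have e2 : hadj ((lam^-1)%:C *: z) *m Cb *m x = (lam^-1)%:C *: (hadj z *m z).
  by rewrite hadjZ conjc_real -mulmxA -scalemxAl.
have e3 : hadj ((lam^-1)%:C *: z) *m ((lam^-1)%:C *: z) = (lam^-1 * lam^-1)%:C *: (hadj z *m z).
  by rewrite hadjZ conjc_real -scalemxAl -scalemxAr scalerA rmorphM.
rewrite e1 e2 e3.
have hz := hnorm z; have hv := hnorm v.
have hy := nrm2_ge0 ((lam^-1)%:C *: z).
have hx := nrm2_ge0 x.
move: hz hv; move: (hadj z *m z) (hadj v *m v) => Z V.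
rewrite !mxE.
case: (Z 0 0) => a b; case: (V 0 0) => c d /= <- <-.
set t := nrm2 _ in hy *.
move=> h.
have et : 0 <= e * t by rewrite mulr_ge0.
have lne : lam != 0 by rewrite gt_eqF.
have eq : - (lam * c - 0 * d) + (lam^-1 * a - 0 * b) + (lam^-1 * a - 0 * b) -
    (lam * (lam^-1 / lam * a - 0 * b) - 0 * (lam^-1 / lam * b + 0 * a)) =
    lam^-1 * a - lam * c by field.
rewrite eq in h.
lra.
Qed.
Lemma nrm2_0 k : nrm2 (0 : 'cV[C]_k) = 0.
Proof. by rewrite /nrm2 big1 // => j _; rewrite mxE /= expr0n /= addr0. Qed.

Lemma cmxM p q k (A : 'M[R]_(p,q)) (B : 'M[R]_(q,k)) : cmx (A *m B) = cmx A *m cmx B.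
Proof. by rewrite !cmxE map_mxM. Qed.
Lemma cmxD p q (A B : 'M[R]_(p,q)) : cmx (A + B) = cmx A + cmx B.
Proof. by rewrite !cmxE map_mxD. Qed.
Lemma cmxN p q (A : 'M[R]_(p,q)) : cmx (- A) = - cmx A.
Proof. by rewrite !cmxE map_mxN. Qed.
Lemma cmx_tr p q (A : 'M[R]_(p,q)) : cmx A^T = hadj (cmx A).
Proof. by rewrite hadj_cmx. Qed.
Lemma cmx0 p q : cmx (0 : 'M[R]_(p,q)) = 0.
Proof. by rewrite cmxE map_mx0. Qed.
Lemma cmx_scalar k (a : R) : cmx (a%:M : 'M[R]_k) = (a%:C)%:M.
Proof. by rewrite cmxE map_scalar_mx. Qed.
Lemma cmx_block m1 m2 n1 n2 (A : 'M[R]_(m1,n1)) (B : 'M[R]_(m1,n2)) (D : 'M[R]_(m2,n1)) (E : 'M[R]_(m2,n2)) :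
  cmx (block_mx A B D E) = block_mx (cmx A) (cmx B) (cmx D) (cmx E).
Proof. by rewrite !cmxE map_block_mx. Qed.
Lemma cmx_col m1 m2 n (A : 'M[R]_(m1,n)) (B : 'M[R]_(m2,n)) :
  cmx (col_mx A B) = col_mx (cmx A) (cmx B).
Proof. by rewrite !cmxE map_col_mx. Qed.
Lemma cmx_row m n1 n2 (A : 'M[R]_(m,n1)) (B : 'M[R]_(m,n2)) :
  cmx (row_mx A B) = row_mx (cmx A) (cmx B).
Proof. by rewrite !cmxE map_row_mx. Qed.
End H.

Unset Implicit Arguments.
Set Strict Implicit.
Theorem proposition2 (R : realType) (n m ng nw r : nat) (hr : (0 < r)%N)
  (A : 'M[R]_n) (S : 'M[R]_(n, ng)) (C : 'M[R]_(m, n)) (Dw : 'M[R]_(n, nw))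
  (P : 'M[R]_(n + (ng + (r - 1) * ng)))
  (Rm Q : 'M[R]_(n + (ng + (r - 1) * ng), m)) (lam : R) :
  let Aa := Aa r A S in
  let Da := Da ng r Dw in
  let Ca := Ca ng r C in
  let Cb := Cbara R n ng r in
  let X := Aa^T *m P + Aa^T *m Ca^T *m Rm^T - Ca^T *m Q^T
           + P *m Aa + Rm *m Ca *m Aa - Q *m Ca in
  let B12 := - ((P + Rm *m Ca) *m Da) in
  posdef P -> 0 < lam ->
  negdef (block_mx (block_mx X B12 B12^T (- lam%:M)) (col_mx Cb^T 0)
                   (row_mx Cb 0) (- lam%:M)) ->
  let E := invmx P *m Rm in
  let K := invmx P *m Q in
  let M := 1%:M + E *m Ca in
  let N := M *m Aa - K *m Ca in
  let T := fun s : R[i] =>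
    - (cmx Cb *m invmx (s%:M - cmx N) *m cmx M *m cmx Da) in
  (hinf_norm T < lam%:E)%E.
Proof.
move=> Aa0 Da0 Ca0 Cb0 X B12 hP hlam hL.
cbv zeta.
set E := invmx P *m Rm.
set K := invmx P *m Q.
set M := 1%:M + E *m Ca0.
set N := M *m Aa0 - K *m Ca0.
set T := fun s : R[i] => _.
Show.
have [hPs _] := hP.
have Pu := posdef_unit hP.
have PM : P *m M = P + Rm *m Ca0 by rewrite /M /E mulmxDr mulmx1 !mulmxA mulmxV // mul1mx.
have PK : P *m K = Q by rewrite /K mulmxA mulmxV // mul1mx.
have PN : P *m N = P *m Aa0 + Rm *m Ca0 *m Aa0 - Q *m Ca0.
  by rewrite /N mulmxBr !mulmxA PM mulmxV // mul1mx mulmxDl.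
have NtP : N^T *m P = Aa0^T *m P + Aa0^T *m Ca0^T *m Rm^T - Ca0^T *m Q^T.
  have -> : N^T *m P = (P *m N)^T by rewrite trmx_mul hPs.
  by rewrite PN !linearB !linearD /= !trmx_mul hPs !mulmxA.
have Xeq : X = P *m N + N^T *m P.
  rewrite PN NtP /X.
  move: (Aa0^T *m P) (Aa0^T *m Ca0^T *m Rm^T) (Ca0^T *m Q^T) (P *m Aa0)
    (Rm *m Ca0 *m Aa0) (Q *m Ca0) => a1 a2 a3 a4 a5 a6.
  apply/matrixP => i j; rewrite !mxE; ring.
have B12eq : B12 = - (P *m (M *m Da0)) by rewrite /B12 mulmxA PM.
set P' := cmx P; set N' := cmx N; set G := cmx (M *m Da0); set Cb' := cmx Cb0.
have hP' : hadj P' = P' by rewrite /P' hadj_cmx hPs.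
have hX' : cmx X = P' *m N' + hadj N' *m P' by rewrite Xeq cmxD !cmxM cmx_tr.
move: hL; set L := block_mx _ _ _ _ => hL.
have hL' : cmx L = block_mx (block_mx (cmx X) (- (P' *m G)) (hadj (- (P' *m G)))
   (- (lam%:C)%C%:M)) (col_mx (hadj Cb') 0) (row_mx Cb' 0) (- (lam%:C)%C%:M).
  by rewrite /L B12eq !cmx_block cmx_col cmx_row !cmxN !cmx_scalar !cmx0 !cmx_tr cmxN cmxM.
have [e0 e0p He] := posdef_margin hL.
have Hm0 : forall xi, complex.Re ((hadj xi *m cmx L *m xi) 0 0) <= - e0 * nrm2 xi.
  move=> xi; rewrite Re_quad nrm2E.
  have h1 := He (map_mx (@complex.Re R) xi); have h2 := He (map_mx (@complex.Im R) xi).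
  rewrite qfN in h1; rewrite qfN in h2.
  lra.
have [e1 [e1p [e1l Hm]]] : exists e1, 0 < e1 /\ e1 <= lam /\
   forall xi, complex.Re ((hadj xi *m cmx L *m xi) 0 0) <= - e1 * nrm2 xi.
  have [le|lt] := lerP e0 lam; first by exists e0.
  exists lam; split => //; split => // xi.
  apply: (le_trans (Hm0 xi)); rewrite !mulNr lerN2; apply: ler_wpM2r.
    exact: nrm2_ge0.
  exact: ltW.
rewrite hL' in Hm.
have lne : lam != 0 by rewrite gt_eqF.
have Au : forall mu : R, ((Complex 0 mu)%:M - N') \in unitmx.
  move=> mu; set s := Complex 0 mu.
  have hs : conjc s = - s by apply/eqP; rewrite eq_complex /= oppr0 !eqxx.
  rewrite unitmxE unitfE -det_tr; apply/negP => /det0P [u nu hu].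
  set x := u^T.
  have nx : x != 0.
    apply: contraNneq nu => /(congr1 trmx); rewrite trmxK => ->; apply/eqP; exact: trmx0.
  have hAx : (s%:M - N') *m x = 0.
    by have := congr1 trmx hu; rewrite trmx_mul trmxK => ->; exact: trmx0.
  have hN : N' *m x = s *: x - G *m 0.
    move/eqP: hAx; rewrite mulmx0 subr0 mulmxBl mul_scalar_mx subr_eq0 => /eqP ->.
    done.
  have := core_bound hP' hX' hs hN Hm hlam (ltW e1p).
  rewrite !nrm2_0 mulr0 subr0 addr0.
  have h1 := nrm2_gt0 nx; have h2 := nrm2_ge0 (Cb' *m x).
  have h3 : 0 <= lam^-1 * nrm2 (Cb' *m x) by rewrite mulr_ge0 // invr_ge0 ltW.
  have h4 : 0 < e1 * nrm2 x by rewrite mulr_gt0.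
  lra.
set Kc := Num.sqrt (lam * (lam - e1)).
have K0 : 0 <= lam * (lam - e1) by rewrite mulr_ge0 ?subr_ge0 // ltW.
have Klt : Kc < lam.
  have k2 := sqr_sqrtr K0; have k0 := sqrtr_ge0 (lam * (lam - e1)).
  rewrite -/Kc in k2 k0. nra.
apply: (@le_lt_trans _ _ Kc%:E); last by rewrite lte_fin.
apply: ge_ereal_sup => _ [mu _ <-].
apply: ge_ereal_sup => _ [v /= nv <-].
rewrite lee_fin.
have cv : 0 < cvnorm v.
  by change (0 < Num.sqrt (nrm2 v)); rewrite sqrtr_gt0 nrm2_gt0.
rewrite ler_pdivrMr //.
set s := Complex 0 mu.
have hs : conjc s = - s by apply/eqP; rewrite eq_complex /= oppr0 !eqxx.
set x := invmx (s%:M - N') *m (G *m v).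
have hT : T s *m v = - (Cb' *m x) by rewrite /T /x /G mulNmx cmxM !mulmxA.
change (Num.sqrt (nrm2 (T s *m v)) <= Kc * Num.sqrt (nrm2 v)).
rewrite hT nrm2N /Kc -sqrtrM // ler_sqrt; last by rewrite mulr_ge0 // nrm2_ge0.
have hN : N' *m x = s *: x - G *m v.
  have : (s%:M - N') *m x = G *m v by rewrite /x mulmxA mulmxV ?Au // mul1mx.
  by rewrite mulmxBl mul_scalar_mx => <-; rewrite opprB addrC subrK.
have := core_bound hP' hX' hs hN Hm hlam (ltW e1p).
have h1 := nrm2_ge0 x; have h2 := nrm2_ge0 v.
have h3 : 0 <= e1 * nrm2 x by rewrite mulr_ge0 // ltW.
move=> h.
have h4 : lam^-1 * nrm2 (Cb' *m x) <= (lam - e1) * nrm2 v by lra.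
rewrite -mulrA -ler_pdivrMl // mulrC; exact: h4.
Qed.
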